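(* Let $E$ be a closed formula in which all bound variables are pairwise distinct, and let $x$ be a variable bound in $E$. Let $[\Gamma]_{V(x)}$ be a normal item occurring in (a context of a sequent of) a derivation of $\vdash E$ in LJB, and let $z$ be a free variable of $[\Gamma]_{V(x)}$. Then $x$ is in the scope of $z$.
   Context: Formulas: $A ::= P(t_1,\dots,t_n)\mid A\rightarrow A\mid\forall x\,A$, with first-order terms. A formula is a tree with nodes labelled by atomic formulas, $\rightarrow$, or $\forall x$; positions are node addresses ordered by prefix. In $E$ each bound variable $x$ labels a unique position $\forall x$; a variable $y$ is in the scope of $x$ if the position labelled $\forall x$ is a strict prefix of that labelled $\forall y$. $V(x)$ is the set of variables bound in the subformula $\forall x\,A$ of $E$ at position $\forall x$ (equivalently $x$ together with all variables in the scope of $x$). LJB: an LJB-context is a finite multiset of items; an item is a formula or $[\Gamma]_V$ ($V$ a finite set of variables bound by the bracket, $\Gamma$ an LJB-context); $FV([\Gamma]_V)=FV(\Gamma)\setminus V$. Cleaning rules (anywhere in a context): $[I,\Gamma]_V\longrightarrow I,[\Gamma]_V$ if $FV(I)\cap V=\emptyset$; $[\ ]_V\longrightarrow\emptyset$; $I\,I\longrightarrow I$; an item is normal if no cleaning rule applies inside it; $\Gamma{\downarrow}$ is the normal form for a fixed strategy. LJB rules apply only to LJB-sequents with normal context in which, in each formula, bound variables are distinct and distinct from free variables; formulas are not identified modulo $\alpha$. Rules: (L$\rightarrow$) from $\Gamma'\vdash A_1,\dots,\Gamma'\vdash A_n$ infer $\Gamma\vdash P$, where $\Gamma=\Gamma_1,[\Gamma_2,[\dots\Gamma_{i-1},[\Gamma_i,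 A_1\rightarrow\dots\rightarrow A_n\rightarrow P]_{V_{i-1}}\dots]_{V_2}]_{V_1}$ ($i\ge1$), $\Gamma'=([\dots[[\Gamma_1]_{V_1},\Gamma_2]_{V_2},\dots,\Gamma_{i-1}]_{V_{i-1}},\Gamma_i,A_1\rightarrow\dots\rightarrow A_n\rightarrow P){\downarrow}$, $P$ atomic with no free variable in $V_1\cup\dots\cup V_{i-1}$; (R$\forall$) from $[\Gamma]_V{\downarrow}\vdash A$ infer $\Gamma\vdash\forall x\,A$, $V$ the set of all variables bound in $\forall x\,A$; (R$\rightarrow$) from $(\Gamma,A){\downarrow}\vdash B$ infer $\Gamma\vdash A\rightarrow B$. *)

(* Defs.v *)
From Stdlib Require Import List.
Import ListNotations.

Definition var := nat.

Inductive term : Type :=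
| TVar (v : var)
| TFn (f : nat) (ts : list term).

Fixpoint tvars (t : term) : list var :=
  match t with
  | TVar v => [v]
  | TFn _ ts =>
      (fix go (l : list term) : list var :=
         match l with [] => [] | u :: l' => tvars u ++ go l' end) ts
  end.

Inductive formula : Type :=
| Atom (P : nat) (ts : list term)
| Imp (A B : formula)
| All (x : var) (A : formula).

Fixpoint fvf (A : formula) : list var :=
  match A with
  | Atom _ ts => flat_map tvars ts
  | Imp A B => fvf A ++ fvf B
  | All x A => filter (fun v => negb (Nat.eqb v x)) (fvf A)
  end.

Fixpoint bvars (A : formula) : list var :=
  match A with
  | Atom _ _ => []
  | Imp A B => bvars A ++ bvars B
  | All x A => x :: bvars A
  end.

Inductive at_pos : formula -> list nat -> formula -> Prop :=
| ap_root A : at_pos A [] A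
| ap_impl A B p C : at_pos A p C -> at_pos (Imp A B) (0 :: p) C
| ap_impr A B p C : at_pos B p C -> at_pos (Imp A B) (1 :: p) C
| ap_all x A p C : at_pos A p C -> at_pos (All x A) (0 :: p) C.

(** [in_scope E y x] : y is in the scope of x in E, i.e. the position labelled
    forall x is a strict prefix of the position labelled forall y. *)
Definition in_scope (E : formula) (y x : var) : Prop :=
  exists p q Bx By r, at_pos E p (All x Bx) /\ at_pos E q (All y By) /\
    r <> [] /\ q = p ++ r.

(** V(x) in E: the variables bound in the subformula forall x A of E at the
    position labelled forall x. *)
Definition Vset (E : formula) (x : var) (v : var) : Prop :=
  exists p B, at_pos E p (All x B) /\ In v (bvars (All x B)).

(** LJB items and contexts (multisets represented as lists) *)
Inductive item : Type :=
| IForm (A : formula)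
| IBr (V : list var) (G : list item).

Fixpoint ifv (i : item) (z : var) {struct i} : Prop :=
  match i with
  | IForm A => In z (fvf A)
  | IBr V G => ~ In z V /\
      (fix go (l : list item) : Prop :=
         match l with [] => False | j :: l' => ifv j z \/ go l' end) G
  end.

(** equality of items / contexts as (nested) multisets, brackets bind finite sets *)
Inductive ieq : item -> item -> Prop :=
| ieq_form A : ieq (IForm A) (IForm A)
| ieq_br V V' G G' : (forall v, In v V <-> In v V') -> ceq G G' ->
    ieq (IBr V G) (IBr V' G')
with ceq : list item -> list item -> Prop :=
| ceq_nil : ceq [] []
| ceq_cons i i' G G' : ieq i i' -> ceq G G' -> ceq (i :: G) (i' :: G')
| ceq_swap i j G : ceq (i :: j :: G) (j :: i :: G)
| ceq_trans G1 G2 G3 : ceq G1 G2 -> ceq G2 G3 -> ceq G1 G3.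

Inductive cstep : list item -> list item -> Prop :=
| cs_out V I G R :
    ~ (exists v, In v V /\ ifv I v) ->
    cstep (IBr V (I :: G) :: R) (I :: IBr V G :: R)
| cs_empty V R : cstep (IBr V [] :: R) R
| cs_dup I I' R : ieq I I' -> cstep (I :: I' :: R) (I :: R)
| cs_in V G G' R : cstep G G' -> cstep (IBr V G :: R) (IBr V G' :: R)
| cs_tail i R R' : cstep R R' -> cstep (i :: R) (i :: R')
| cs_perm G1 G2 G3 : ceq G1 G2 -> cstep G2 G3 -> cstep G1 G3.

Inductive cstar : list item -> list item -> Prop :=
| cstar_refl G : cstar G G
| cstar_step G1 G2 G3 : cstep G1 G2 -> cstar G2 G3 -> cstar G1 G3.

Definition ctx_normal (G : list item) : Prop := ~ exists G', cstep G G'.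

Definition item_normal (i : item) : Prop := ~ exists G', cstep [i] G'.

(** [nf] computes normal forms (the fixed strategy): G -->* nf G, nf G normal *)
Definition is_nf (nf : list item -> list item) : Prop :=
  forall G, cstar G (nf G) /\ ctx_normal (nf G).

Inductive item_in : item -> list item -> Prop :=
| ii_here i G : In i G -> item_in i G
| ii_deep i V G' G : In (IBr V G') G -> item_in i G' -> item_in i G.

Definition formula_ok (A : formula) : Prop :=
  NoDup (bvars A) /\ (forall v, In v (bvars A) -> ~ In v (fvf A)).

Definition sequent := (list item * formula)%type.

Definition seq_ok (s : sequent) : Prop :=
  ctx_normal (fst s) /\
  (forall A, item_in (IForm A) (fst s) -> formula_ok A) /\
  formula_ok (snd s).

(** G1,[G2,[...G_{i-1},[G_i, inner]_{V_{i-1}}...]_{V2}]_{V1} *)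
Fixpoint nestL (L : list (list item * list var)) (inner : list item) : list item :=
  match L with
  | [] => inner
  | (G, V) :: L' => G ++ [IBr V (nestL L' inner)]
  end.

(** [...[[G1]_{V1},G2]_{V2},...,G_{i-1}]_{V_{i-1}} (empty when i = 1) *)
Definition nestR (L : list (list item * list var)) : list item :=
  fold_left (fun acc GV => [IBr (snd GV) (acc ++ fst GV)]) L [].

Definition arrows (As : list formula) (P : formula) : formula :=
  fold_right Imp P As.

Inductive rule (nf : list item -> list item) : list sequent -> sequent -> Prop :=
| r_L G L Gi As p ts :
    ceq G (nestL L (Gi ++ [IForm (arrows As (Atom p ts))])) ->
    (forall v, In v (flat_map snd L) -> ~ In v (fvf (Atom p ts))) ->
    rule nf
      (map (fun A => (nf (nestR L ++ Gi ++ [IForm (arrows As (Atom p ts))]), A)) As)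
      (G, Atom p ts)
| r_All G x A :
    rule nf [(nf [IBr (bvars (All x A)) G], A)] (G, All x A)
| r_Imp G A B :
    rule nf [(nf (G ++ [IForm A]), B)] (G, Imp A B).

Definition ljb_rule nf (ps : list sequent) (c : sequent) : Prop :=
  rule nf ps c /\ seq_ok c /\ Forall seq_ok ps.

Inductive deriv (nf : list item -> list item) : sequent -> Prop :=
| d_rule ps c : ljb_rule nf ps c -> (forall p, In p ps -> deriv nf p) -> deriv nf c.

Inductive occurs (nf : list item -> list item) (s : sequent) : sequent -> Prop :=
| occ_root c : deriv nf c -> s = c -> occurs nf s c
| occ_up ps c p : ljb_rule nf ps c -> (forall q, In q ps -> deriv nf q) ->
    In p ps -> occurs nf s p -> occurs nf s c.

(* Main.v *)
Require Import Defs.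
From Stdlib Require Import List.
Import ListNotations.
From Stdlib Require Import Classical.

Lemma ifv_br V G z : ifv (IBr V G) z <-> ~ In z V /\ exists j, In j G /\ ifv j z.
Proof.
  simpl. split; intros [H1 H2]; split; auto; clear H1; induction G as [|a G IH]; simpl in *.
  - contradiction.
  - destruct H2 as [H|H]; [exists a; auto|destruct (IH H) as [j [? ?]]; exists j; auto].
  - destruct H2 as [j [[] _]].
  - destruct H2 as [j [[->|Hj] Hz]]; [left; auto| right; apply IH; eauto].
Qed.

Fixpoint ieq_refl (i : item) : ieq i i :=
  match i with
  | IForm A => ieq_form A
  | IBr V G => ieq_br V V G G (fun v => iff_refl _)
      ((fix go (l : list item) : ceq l l :=
          match l with [] => ceq_nil | j :: l' => ceq_cons _ _ _ _ (ieq_refl j) (go l') end) G)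
  end.

Lemma ceq_refl G : ceq G G.
Proof. induction G; constructor; auto using ieq_refl. Qed.

Lemma ceq_app G1 G2 R : ceq G1 G2 -> ceq (G1 ++ R) (G2 ++ R).
Proof. induction 1; simpl; try solve [constructor; auto]. apply ceq_refl. econstructor; eauto. Qed.

Lemma cstep_app G G' R : cstep G G' -> cstep (G ++ R) (G' ++ R).
Proof.
  intros H; revert R; induction H; intros RR; simpl.
  - apply cs_out; auto.
  - apply cs_empty.
  - apply cs_dup; auto.
  - apply cs_in; auto.
  - apply cs_tail; auto.
  - eapply cs_perm; [apply ceq_app; eauto | auto].
Qed.

Lemma cstep_mid D1 G G' D2 : cstep G G' -> cstep (D1 ++ G ++ D2) (D1 ++ G' ++ D2).
Proof. intros H; induction D1; simpl; [apply cstep_app; auto | apply cs_tail; auto]. Qed.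

Lemma ceq_move D1 J D2 : ceq (D1 ++ J :: D2) (J :: D1 ++ D2).
Proof.
  induction D1 as [|a D1 IH]; simpl. apply ceq_refl.
  eapply ceq_trans. apply ceq_cons. apply ieq_refl. apply IH. apply ceq_swap.
Qed.

Inductive wn : item -> Prop :=
| wn_form A : wn (IForm A)
| wn_br W D : (forall J, In J D -> (exists g, In g W /\ ifv J g) /\ wn J) -> wn (IBr W D).

Definition item_rect' (P : item -> Prop) (HF : forall A, P (IForm A))
  (HB : forall V G, (forall j, In j G -> P j) -> P (IBr V G)) : forall i, P i :=
  fix F i := match i with
  | IForm A => HF A
  | IBr V G => HB V G ((fix go (l : list item) : forall j, In j l -> P j :=
       match l with [] => fun j H => False_ind _ H
       | a :: l' => fun j H => match H with or_introl e => eq_ind a P (F a) j e | or_intror H' => go l' j H' end end) G)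
  end.

Lemma normal_wn : forall I, (forall G', ~ cstep [I] G') -> wn I.
Proof.
  apply (item_rect' (fun I => (forall G', ~ cstep [I] G') -> wn I)).
  - intros; constructor.
  - intros W D IH Hn. constructor. intros J HJ.
    destruct (in_split _ _ HJ) as [D1 [D2 ->]].
    split.
    + apply NNPP; intro Hno.
      apply (Hn (J :: [IBr W (D1 ++ D2)])).
      apply (cs_perm _ [IBr W (J :: D1 ++ D2)]). apply ceq_cons. apply ieq_br. intro; tauto. apply ceq_move. apply ceq_nil.
      apply cs_out. auto.
    + apply IH; auto. intros G' Hs.
      apply (Hn [IBr W (D1 ++ G' ++ D2)]). apply cs_in.
      apply (cstep_mid D1 [J] G' D2 Hs).
Qed.

Lemma at_pos_app A p C r D : at_pos A p C -> at_pos C r D -> at_pos A (p ++ r) D.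
Proof. induction 1; simpl; intros; try constructor; auto. Qed.

Lemma at_pos_split p : forall A r C D, at_pos A (p ++ r) D -> at_pos A p C -> at_pos C r D.
Proof.
  induction p as [|n p IH]; simpl; intros A r C D H1 H2.
  - inversion H2; subst; auto.
  - inversion H2; subst; inversion H1; subst; eauto.
Qed.

Lemma bvars_pos C v : In v (bvars C) <-> exists r B, at_pos C r (All v B).
Proof.
  induction C as [P ts|A IHA B IHB|x A IH]; simpl.
  - split; [tauto|intros [r [B H]]; inversion H].
  - rewrite in_app_iff, IHA, IHB. split.
    + intros [[r [B' H]]|[r [B' H]]]; eexists; eexists; [apply ap_impl|apply ap_impr]; eauto.
    + intros [r [B' H]]; inversion H; subst; eauto.
  - rewrite IH. split.
    + intros [->|[r [B H]]]; [exists [], A; constructor|exists (0::r), B; constructor; auto].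
    + intros [r [B H]]; inversion H; subst; eauto.
Qed.

Lemma nodup_app_disj {T} (l l' : list T) a : NoDup (l ++ l') -> In a l -> In a l' -> False.
Proof.
  intros H H1 H2. destruct (in_split _ _ H2) as [l1 [l2 ->]].
  rewrite app_assoc in H. apply NoDup_remove_2 in H. apply H. apply in_app_iff; left; apply in_app_iff; auto.
Qed.

Lemma pos_unique E : NoDup (bvars E) -> forall p q v A B,
  at_pos E p (All v A) -> at_pos E q (All v B) -> p = q.
Proof.
  induction E as [P ts|E1 IH1 E2 IH2|x E IH]; simpl; intros Hnd p q v A B H1 H2.
  - inversion H1.
  - apply NoDup_app_remove_r in Hnd as Hnd1. apply NoDup_app_remove_l in Hnd as Hnd2.
    inversion H1; subst; inversion H2; subst;
     try (f_equal; eauto; fail); exfalso; eapply nodup_app_disj; try exact Hnd; apply bvars_pos; eauto.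
  - inversion Hnd; subst.
    inversion H1; subst; inversion H2; subst; auto.
    + exfalso; apply H3; apply bvars_pos; eauto.
    + exfalso; apply H3; apply bvars_pos; eauto.
    + f_equal; eauto.
Qed.

Lemma free_pos A p B : at_pos A p B -> forall f, In f (fvf B) ->
  In f (fvf A) \/ exists pf Bf r, at_pos A pf (All f Bf) /\ r <> [] /\ p = pf ++ r.
Proof.
  induction 1; intros f Hf; auto.
  - destruct (IHat_pos f Hf) as [H'|[pf [Bf [r [H1 [H2 H3]]]]]].
    + left; simpl; apply in_app_iff; auto.
    + right; exists (0::pf), Bf, r; subst; repeat split; auto; constructor; auto.
  - destruct (IHat_pos f Hf) as [H'|[pf [Bf [r [H1 [H2 H3]]]]]].
    + left; simpl; apply in_app_iff; auto.
    + right; exists (1::pf), Bf, r; subst; repeat split; auto; constructor; auto.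
  - destruct (IHat_pos f Hf) as [H'|[pf [Bf [r [H1 [H2 H3]]]]]].
    + destruct (PeanoNat.Nat.eq_dec f x) as [->|Hne].
      * right; exists [], A, (0::p); repeat split; [constructor|discriminate].
      * left; simpl; apply filter_In; split; auto. apply Bool.negb_true_iff, PeanoNat.Nat.eqb_neq; auto.
    + right; exists (0::pf), Bf, r; subst; repeat split; auto; constructor; auto.
Qed.

Lemma prefix_cmp : forall (p q r r' : list nat), p ++ r = q ++ r' ->
  (exists s, q = p ++ s) \/ (exists s, p = q ++ s).
Proof.
  induction p as [|a p IH]; intros q r r' H. left; exists q; auto.
  destruct q as [|b q]. right; exists (a::p); auto.
  simpl in H; injection H as -> H. destruct (IH _ _ _ H) as [[s ->]|[s ->]]; [left|right]; exists s; auto.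
Qed.

Lemma at_pos_fun A p C C' : at_pos A p C -> at_pos A p C' -> C = C'.
Proof. intros H; revert C'; induction H; intros C' H'; inversion H'; subst; auto. Qed.



Inductive good (E : formula) : item -> Prop :=
| g_form A p : at_pos E p A -> good E (IForm A)
| g_br V G p y B : at_pos E p (All y B) -> (forall v, In v V <-> In v (bvars (All y B))) ->
    (forall j, In j G -> good E j) -> good E (IBr V G).

Definition gctx E G := forall j, In j G -> good E j.

Definition goodV E V := exists p y B, at_pos E p (All y B) /\ (forall v, In v V <-> In v (bvars (All y B))).

Scheme ieq_mut := Induction for ieq Sort Prop with ceq_mut := Induction for ceq Sort Prop.

Lemma ceq_good E G G' : ceq G G' -> gctx E G -> gctx E G'.
Proof.
  apply (ceq_mut (fun i i' _ => good E i -> good E i') (fun G G' _ => gctx E G -> gctx E G')); unfold gctx; simpl; intros.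
  - auto.
  - inversion H0; subst. econstructor; eauto. intro v; rewrite <- i; auto.
  - auto.
  - destruct H2 as [->|H2]; auto.
  - firstorder.
  - auto.
Qed.

Lemma good_br_inv E V G : good E (IBr V G) -> goodV E V /\ gctx E G.
Proof. intros H; inversion H; subst; split; auto. exists p, y, B; auto. Qed.

Lemma good_br E V G : goodV E V -> gctx E G -> good E (IBr V G).
Proof. intros [p [y [B [H1 H2]]]] HG; econstructor; eauto. Qed.

Lemma cstep_good E G G' : cstep G G' -> gctx E G -> gctx E G'.
Proof.
  induction 1; unfold gctx; simpl; intros Hg j Hj.
  - assert (HB := Hg _ (or_introl eq_refl)). apply good_br_inv in HB as [HV HG].
    destruct Hj as [<-|[<-|Hj]]; [apply HG; simpl; auto | apply good_br; auto; intros k Hk; apply HG; simpl; auto | auto].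
  - auto.
  - destruct Hj as [<-|Hj]; auto.
  - assert (HB := Hg _ (or_introl eq_refl)). apply good_br_inv in HB as [HV HG].
    destruct Hj as [<-|Hj]; [apply good_br; auto|auto].
  - destruct Hj as [<-|Hj]; auto. apply IHcstep; auto. intros; auto. intros k Hk; auto.
  - apply IHcstep; auto. eapply ceq_good; eauto.
Qed.

Lemma cstar_good E G G' : cstar G G' -> gctx E G -> gctx E G'.
Proof. induction 1; eauto using cstep_good. Qed.

Definition gseq E (s : sequent) := gctx E (fst s) /\ exists p, at_pos E p (snd s).


Lemma gctx_app E G1 G2 : gctx E (G1 ++ G2) <-> gctx E G1 /\ gctx E G2.
Proof. unfold gctx; split; [intros H; split; intros; apply H; apply in_app_iff; auto|intros [H1 H2] j Hj; apply in_app_iff in Hj as [?|?]; auto]. Qed.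

Lemma nestL_good E L inner : gctx E (nestL L inner) ->
  gctx E inner /\ (forall G V, In (G, V) L -> gctx E G /\ goodV E V).
Proof.
  induction L as [|[G V] L IH]; simpl; intros H.
  - split; auto; intros; contradiction.
  - apply gctx_app in H as [H1 H2]. assert (HB := H2 _ (or_introl eq_refl)). inversion HB; subst.
    destruct (IH H5) as [Hi HL]. split; auto.
    intros G0 V0 [Heq|Hin]; auto. injection Heq as -> ->. split; auto. exists p, y, B; auto.
Qed.

Lemma nestR_good E L : forall acc, gctx E acc -> (forall G V, In (G, V) L -> gctx E G /\ goodV E V) ->
  gctx E (fold_left (fun acc GV => [IBr (snd GV) (acc ++ fst GV)]) L acc).
Proof.
  induction L as [|[G V] L IH]; simpl; intros acc Hacc HL; auto.
  apply IH; auto.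
  destruct (HL G V (or_introl eq_refl)) as [HG [p [y [B [H1 H2]]]]].
  intros j [<-|[]]. econstructor; eauto. apply gctx_app; auto.
Qed.

Lemma arrows_pos As P A : In A As -> exists r, at_pos (arrows As P) r A.
Proof.
  induction As as [|a As IH]; simpl; intros H; [contradiction|].
  destruct H as [->|H]. exists [0]; constructor; constructor.
  destruct (IH H) as [r Hr]; exists (1::r); constructor; auto.
Qed.

Lemma rule_good E nf (Hnf : is_nf nf) ps c : rule nf ps c -> gseq E c -> forall p, In p ps -> gseq E p.
Proof.
  intros Hr [Hc [pc Hpc]] p Hp. destruct Hr; simpl in *.
  - apply in_map_iff in Hp as [A [<- HA]]. unfold gseq; simpl.
    apply (ceq_good E) in H; auto. apply nestL_good in H as [Hi HL].
    apply gctx_app in Hi as [HGi HF]. split.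
    + eapply cstar_good. apply Hnf. apply gctx_app; split. apply nestR_good; auto. intros j [].
      apply gctx_app; auto.
    + assert (HF' := HF _ (or_introl eq_refl)). inversion HF'; subst.
      destruct (arrows_pos As (Atom p0 ts) A HA) as [r Hr]. exists (p ++ r). eapply at_pos_app; eauto.
  - destruct Hp as [<-|[]]. split; simpl.
    + eapply cstar_good. apply Hnf. intros j [<-|[]]. econstructor; eauto. intro; tauto.
    + exists (pc ++ [0]). eapply at_pos_app; eauto. repeat constructor.
  - destruct Hp as [<-|[]]. split; simpl.
    + eapply cstar_good. apply Hnf. apply gctx_app; split; auto.
      intros j [<-|[]]. econstructor. eapply at_pos_app; eauto. repeat constructor.
    + exists (pc ++ [1]). eapply at_pos_app; eauto. repeat constructor.
Qed.

Lemma occurs_good E nf (Hnf : is_nf nf) s c : occurs nf s c -> gseq E c -> gseq E s.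
Proof.
  induction 1; intros Hc. subst; auto.
  apply IHoccurs. destruct H as [Hr _]. eapply rule_good; eauto.
Qed.

Lemma item_in_good E i G : item_in i G -> gctx E G -> good E i.
Proof.
  induction 1; intros HG; auto.
  apply IHitem_in. assert (HB := HG _ H). inversion HB; subst; auto.
Qed.

Definition strict_pos E f a := exists pf Bf r, at_pos E pf (All f Bf) /\ r <> [] /\ a = pf ++ r.

Definition anchor E (I : item) (a : list nat) : Prop :=
  match I with
  | IForm A => at_pos E a A
  | IBr W D => exists y B, at_pos E a (All y B) /\ (forall v, In v W <-> In v (bvars (All y B)))
  end.

Lemma good_anchor E I : good E I -> exists a, anchor E I a.
Proof. destruct 1; simpl; eauto. Qed.

Lemma main E (Hc : fvf E = []) (Hnd : NoDup (bvars E)) I : good E I -> wn I ->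
  forall a, anchor E I a -> forall f, ifv I f -> strict_pos E f a.
Proof.
  induction 1 as [A p Hp|W D p0 y0 B0 Hp0 HW0 HD IH]; intros Hw a Ha f Hf; simpl in Ha.
  - simpl in Hf. destruct (free_pos _ _ _ Ha f Hf) as [H|H]; [rewrite Hc in H; contradiction|exact H].
  - destruct Ha as [y [B [Hy HW]]].
    apply ifv_br in Hf as [HfW [J [HJ HfJ]]].
    inversion Hw; subst. destruct (H0 J HJ) as [[g [HgW HgJ]] HwJ].
    destruct (good_anchor _ _ (HD J HJ)) as [aJ HaJ].
    destruct (IH J HJ HwJ aJ HaJ g HgJ) as [pg [Bg [r [Hpg [Hr HaJeq]]]]].
    assert (HgW2 : In g (bvars (All y B))) by (apply HW; auto). apply bvars_pos in HgW2 as [r1 [Bg' Hr1]].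
    assert (Hpg' : pg = a ++ r1) by (eapply pos_unique; eauto; eapply at_pos_app; eauto).
    destruct (IH J HJ HwJ aJ HaJ f HfJ) as [pf [Bf [r2 [Hpf [Hr2 Hfeq]]]]].
    assert (Hcmp : aJ = a ++ (r1 ++ r)) by (rewrite app_assoc, <- Hpg'; auto).
    rewrite Hcmp in Hfeq.
    assert (Hin : forall s, pf = a ++ s -> False).
    { intros s ->. apply HfW. apply HW. apply (proj2 (bvars_pos (All y B) f)). exists s, Bf.
      eapply at_pos_split; eauto. }
    destruct (prefix_cmp _ _ _ _ Hfeq) as [[s Hs]|[s Hs]].
    + exfalso; eapply Hin; eauto.
    + destruct s as [|n s]. exfalso; apply (Hin []); rewrite Hs, !app_nil_r; auto.
      exists pf, Bf, (n :: s); repeat split; auto; discriminate.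
Qed.

Theorem proposition11 (nf : list item -> list item) (Hnf : is_nf nf)
  (E : formula) (x z : var) (V : list var) (Gam : list item) (s : sequent) :
  fvf E = [] ->
  NoDup (bvars E) ->
  In x (bvars E) ->
  occurs nf s ([], E) ->
  item_in (IBr V Gam) (fst s) ->
  item_normal (IBr V Gam) ->
  (forall v, In v V <-> Vset E x v) ->
  ifv (IBr V Gam) z ->
  in_scope E x z.
Proof.
  intros Hc Hnd Hx Hocc Hin Hnorm HV Hz.
  assert (Hs : gseq E s).
  { eapply occurs_good; eauto. split; simpl. intros j []. exists []; constructor. }
  assert (Hg : good E (IBr V Gam)) by (eapply item_in_good; eauto; apply Hs).
  assert (Hw : wn (IBr V Gam)).
  { apply normal_wn. intros G' HG'. apply Hnorm. eauto. }
  apply bvars_pos in Hx as [px [Bx Hpx]].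
  assert (HVx : forall v, In v V <-> In v (bvars (All x Bx))).
  { intro v; rewrite HV; unfold Vset; split.
    - intros [p [B [Hp Hv]]]. assert (p = px) by (eapply pos_unique; eauto). subst.
      assert (B = Bx) by (assert (All x B = All x Bx) by (eapply at_pos_fun; eauto); congruence). subst; auto.
    - intros Hv; exists px, Bx; auto. }
  assert (Ha : anchor E (IBr V Gam) px) by (exists x, Bx; auto).
  destruct (main E Hc Hnd _ Hg Hw px Ha z Hz) as [pz [Bz [r [Hpz [Hr Heq]]]]].
  exists pz, px, Bz, Bx, r; auto.
Qed.
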